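(* Let $J\ge2$ be an integer and $\Lambda=[2,2^J]\cap\mathbb Q$. Let $\bm\Theta$ be the set of $\bm\theta=(\sigma^2,Q^2,\phi,\varsigma^2,\omega^2,\gamma^2,\alpha,\beta)$ with $\sigma^2,Q^2,\varsigma^2,\omega^2,\gamma^2,\alpha\in(0,\infty)$, $\phi\in(-1,0)\cup(0,1)$, $\beta\in(0,\pi]$. For $\tau\in\Lambda$ and $\bm\theta\in\bm\Theta$ define $$\nu_\tau(\bm\theta)=\frac{\sigma^2}{\tau}+\frac{6Q^2}{\tau^2}+\frac{\varsigma^2\{(\phi^2-1)\tau+2\phi(\phi^\tau-4\phi^{\tau/2}+3)\}}{(\phi-1)^3(\phi+1)\tau^2}+\frac{\tau^2\omega^2}{16}+\frac{(\tau^2+2)\gamma^2}{12\tau}+\frac{\alpha^2\{1-\cos(\beta\tau/2)\}^2}{\tau^2\{1-\cos\beta\}}.$$ If $\bm\theta_1,\bm\theta_2\in\bm\Theta$ satisfy $\nu_\tau(\bm\theta_1)=\nu_\tau(\bm\theta_2)$ for all $\tau\in\Lambda$, then $\bm\theta_1=\bm\theta_2$.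
   Context: For non-integer $\tau$ the power $\phi^\tau$ is defined as $e^{\tau\ln\phi}$ if $\phi\in(0,1)$ and as $e^{\tau(i\pi+\ln(-\phi))}$ if $\phi\in(-1,0)$ (so $\nu_\tau$ may be complex-valued). The six summands are, respectively, the Haar wavelet variances (extended to a continuous scale $\tau$) of a white noise with variance $\sigma^2$, a quantization noise with parameter $Q^2$, a causal AR(1) process with coefficient $\phi$ and innovation variance $\varsigma^2$, a linear drift with parameter $\omega$, a random walk with innovation variance $\gamma^2$, and a sinusoidal process $\alpha\sin(\beta t+U)$, $U\sim\mathcal U(0,2\pi)$. *)

(* Defs.v *)
From Stdlib Require Import Reals QArith.
From Coquelicot Require Import Coquelicot.
Open Scope R_scope.

Record theta := mkTheta {
  th_sigma2 : R; th_Q2 : R; th_phi : R; th_varsigma2 : R;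
  th_omega2 : R; th_gamma2 : R; th_alpha : R; th_beta : R }.

Definition in_Theta (t : theta) : Prop :=
  0 < th_sigma2 t /\ 0 < th_Q2 t /\ 0 < th_varsigma2 t /\ 0 < th_omega2 t /\
  0 < th_gamma2 t /\ 0 < th_alpha t /\
  ((-1 < th_phi t < 0) \/ (0 < th_phi t < 1)) /\
  (0 < th_beta t <= PI).

Definition in_Lambda (J : nat) (tau : R) : Prop :=
  (exists q : Q, Q2R q = tau) /\ 2 <= tau <= 2 ^ J.

(* phi^tau: e^{tau ln phi} if phi > 0, e^{tau (i pi + ln(-phi))} if phi < 0
   (written out via Euler's formula: |phi|^tau (cos(pi tau) + i sin(pi tau))). *)
Definition cpow (phi tau : R) : C :=
  if Rlt_dec 0 phi then RtoC (exp (tau * ln phi))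
  else (exp (tau * ln (- phi)) * cos (PI * tau),
        exp (tau * ln (- phi)) * sin (PI * tau)).

Definition nu (tau : R) (t : theta) : C :=
  let s2 := th_sigma2 t in let Q2 := th_Q2 t in let phi := th_phi t in
  let v2 := th_varsigma2 t in let w2 := th_omega2 t in let g2 := th_gamma2 t in
  let a := th_alpha t in let b := th_beta t in
  Cplus (RtoC (s2 / tau + 6 * Q2 / tau ^ 2))
  (Cplus
    (Cdiv
      (Cmult (RtoC v2)
        (Cplus (RtoC ((phi ^ 2 - 1) * tau))
               (Cmult (RtoC (2 * phi))
                  (Cplus (Cminus (cpow phi tau) (Cmult (RtoC 4) (cpow phi (tau / 2))))
                         (RtoC 3)))))
      (RtoC ((phi - 1) ^ 3 * (phi + 1) * tau ^ 2)))
    (RtoC (tau ^ 2 * w2 / 16 + (tau ^ 2 + 2) * g2 / (12 * tau)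
           + a ^ 2 * (1 - cos (b * tau / 2)) ^ 2 / (tau ^ 2 * (1 - cos b))))).

(* Main.v *)
Require Import Defs.
From Stdlib Require Import Reals QArith Lra Lia Classical ClassicalDescription List.
From Coquelicot Require Import Coquelicot.
Import ListNotations.
Open Scope R_scope.

Definition CE (r x : R) : C := (r * cos x, r * sin x).

Lemma CE_mult r s x y : Cmult (CE r x) (CE s y) = CE (r*s) (x+y).
Proof. unfold CE, Cmult; simpl. rewrite cos_plus, sin_plus. f_equal; ring. Qed.

Lemma CE_pow r x n : Cpow (CE r x) n = CE (r^n) (INR n * x).
Proof.
  induction n.
  - simpl. unfold CE. rewrite Rmult_0_l, cos_0, sin_0. unfold RtoC. f_equal; ring.
  - change (Cpow (CE r x) (S n)) with (Cmult (CE r x) (Cpow (CE r x) n)).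
    rewrite IHn, CE_mult, S_INR. simpl. f_equal; ring.
Qed.

Lemma exp_INR n q : exp (INR n * q) = exp q ^ n.
Proof.
  induction n.
  - simpl. rewrite Rmult_0_l, exp_0. reflexivity.
  - rewrite S_INR, Rmult_plus_distr_r, exp_plus, IHn, Rmult_1_l. simpl. ring.
Qed.

Lemma CE_split p q x y n :
  CE (exp (p + INR n * q)) (x + INR n * y) = Cmult (CE (exp p) x) (Cpow (CE (exp q) y) n).
Proof. rewrite CE_pow, CE_mult, exp_plus, exp_INR. reflexivity. Qed.

Lemma CE_split0 x y n :
  CE (exp 0) (x + INR n * y) = Cmult (CE (exp 0) x) (Cpow (CE (exp 0) y) n).
Proof. rewrite <- CE_split. f_equal. f_equal. ring. Qed.

Lemma sc x : sin x ^ 2 + cos x ^ 2 = 1.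
Proof. pose proof (sin2_cos2 x). unfold Rsqr in H. lra. Qed.

Lemma CE_inj r s x y : - (PI/2) <= x <= PI/2 -> - (PI/2) <= y <= PI/2 ->
  CE (exp r) x = CE (exp s) y -> r = s /\ x = y.
Proof.
  intros Hx Hy H. unfold CE in H. injection H as e1 e2.
  pose proof (exp_pos r). pose proof (exp_pos s).
  assert (E : exp r = exp s).
  { assert (exp r ^ 2 = exp s ^ 2).
    { assert (A1: exp r ^ 2 = (exp r * sin x)^2 + (exp r * cos x)^2) by (pose proof (sc x); nra).
      assert (A2: exp s ^ 2 = (exp s * sin y)^2 + (exp s * cos y)^2) by (pose proof (sc y); nra).
      rewrite A1, A2, e1, e2. ring. }
    nra. }
  split. apply exp_inv; auto.
  apply sin_inj; auto. rewrite E in e2. apply Rmult_eq_reg_l with (exp s); lra.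
Qed.

Lemma CE_neq0 r x : CE (exp r) x <> 0%C.
Proof.
  intro H. unfold CE in H. injection H as e1 e2. pose proof (exp_pos r). pose proof (sc x).
  assert (cos x = 0) by (apply Rmult_eq_reg_l with (exp r); lra).
  assert (sin x = 0) by (apply Rmult_eq_reg_l with (exp r); lra).
  rewrite H1, H2 in H0. lra.
Qed.

Lemma one_CE : RtoC 1 = CE (exp 0) 0.
Proof. unfold CE, RtoC. rewrite exp_0, cos_0, sin_0. f_equal; ring. Qed.

Lemma Cmult_eq0 (a b : C) : Cmult a b = 0%C -> a = 0%C \/ b = 0%C.
Proof.
  intro H. destruct (classic (a = 0%C)) as [h|h]; [left; auto| right].
  replace b with (Cmult (Cinv a) (Cmult a b)) by (field; auto).
  rewrite H. ring.
Qed.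

Lemma Cpow_neq0 (a : C) n : a <> 0%C -> Cpow a n <> 0%C.
Proof.
  intros Ha. induction n; simpl.
  - intro H. injection H. lra.
  - intro H. apply Cmult_eq0 in H. destruct H as [H|H]; [exact (Ha H)| exact (IHn H)].
Qed.

Lemma RtoC_neq0 r : r <> 0 -> RtoC r <> 0%C.
Proof. intros h H. injection H. auto. Qed.

Lemma Cdiv_R (z : C) (r : R) : r <> 0 -> Cdiv z (RtoC r) = Cmult (RtoC (/ r)) z.
Proof. intros h. destruct z as [a b]. unfold Cdiv, Cmult, Cinv, RtoC; simpl. f_equal; field; auto. Qed.
Fixpoint SS (l : list (C*C)) (n : nat) : C :=
  match l with nil => 0%C | (d,m)::l' => Cplus (Cmult d (Cpow m n)) (SS l' n) end.

Definition shiftl (m : C) (l : list (C*C)) := map (fun p => (Cmult (fst p) (Cminus (snd p) m), snd p)) l.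

Lemma SS_shift m l n : SS (shiftl m l) n = Cminus (SS l (S n)) (Cmult m (SS l n)).
Proof. induction l as [|[d u] l IH]; simpl. - ring. - rewrite IH. ring. Qed.

Lemma isol_aux : forall k (R : list (C*C)) (D nu : C) (N : nat),
  (length R <= k)%nat ->
  (forall p, In p R -> snd p <> nu) -> (length R < N)%nat ->
  (forall n, (n < N)%nat -> Cplus (Cmult D (Cpow nu n)) (SS R n) = 0%C) -> D = 0%C.
Proof.
  induction k; intros R D nu N Hk Hd HN H.
  - destruct R; [|simpl in Hk; lia].
    specialize (H 0%nat HN). simpl in H. rewrite <- H. ring.
  - destruct R as [|[d m] R'].
    + specialize (H 0%nat HN). simpl in H. rewrite <- H. ring.
    + assert (Hm : m <> nu) by (apply (Hd (d,m)); simpl; auto).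
      assert (Hz : Cmult D (Cminus nu m) = 0%C).
      { apply (IHk (shiftl m R') _ nu (pred N)).
        - unfold shiftl. rewrite length_map. simpl in Hk. lia.
        - unfold shiftl. intros p Hp. apply in_map_iff in Hp. destruct Hp as [q [<- Hq]].
          simpl. apply (Hd q). simpl; auto.
        - unfold shiftl. rewrite length_map. simpl in HN. lia.
        - intros n Hn. rewrite SS_shift.
          pose proof (H (S n) ltac:(lia)) as H1. pose proof (H n ltac:(lia)) as H2.
          simpl in H1, H2.
          transitivity (Cminus (Cplus (Cmult D (Cmult nu (Cpow nu n))) (Cplus (Cmult d (Cmult m (Cpow m n))) (SS R' (S n))))
                       (Cmult m (Cplus (Cmult D (Cpow nu n)) (Cplus (Cmult d (Cpow m n)) (SS R' n))))).
          + ring.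
          + rewrite H1, H2. ring. }
      apply Cmult_eq0 in Hz. destruct Hz as [Hz|Hz]; auto.
      exfalso. apply Hm. replace nu with (Cplus m (Cminus nu m)) by ring. rewrite Hz. ring.
Qed.

Lemma isol (R : list (C*C)) (D nu : C) (N : nat) :
  (forall p, In p R -> snd p <> nu) -> (length R < N)%nat ->
  (forall n, (n < N)%nat -> Cplus (Cmult D (Cpow nu n)) (SS R n) = 0%C) -> D = 0%C.
Proof. intros. apply (isol_aux (length R) R D nu N); auto. Qed.


Definition Lg (p : R) := ln (Rabs p).
Definition ang (p : R) := if Rlt_dec 0 p then 0 else PI.
Definition cc1 p v := v / (p-1)^2.
Definition cc2 p v := 2*p*v/((p-1)^3*(p+1)).
Definition Aa a b := a^2/(1 - cos b).
Definition Poly s q p v w g a b tau := w/16*tau^4 + g/12*tau^3 + (s + cc1 p v + g/6)*tau + (6*q + 3*cc2 p v + 3/2*Aa a b).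

Lemma cpow_CE p x : p <> 0 -> cpow p x = CE (exp (x * Lg p)) (ang p * x).
Proof.
  intros hp. unfold cpow, CE, Lg, ang. destruct (Rlt_dec 0 p) as [h|h].
  - rewrite Rabs_pos_eq by lra. rewrite Rmult_0_l, cos_0, sin_0. unfold RtoC. f_equal; ring.
  - rewrite Rabs_left by lra. reflexivity.
Qed.

Lemma decomp s q p v w g a b tau : p <> 0 -> p - 1 <> 0 -> p + 1 <> 0 -> 1 - cos b <> 0 -> tau <> 0 ->
  Cmult (RtoC (tau^2)) (nu tau (mkTheta s q p v w g a b)) =
  (RtoC (Poly s q p v w g a b tau) + RtoC (cc2 p v) * CE (exp (tau * Lg p)) (ang p * tau)
   + RtoC (-4 * cc2 p v) * CE (exp (tau/2 * Lg p)) (ang p * (tau/2))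
   + RtoC (- Aa a b) * CE (exp 0) (b*tau/2) + RtoC (- Aa a b) * CE (exp 0) (-(b*tau/2))
   + RtoC (Aa a b / 4) * CE (exp 0) (b*tau) + RtoC (Aa a b / 4) * CE (exp 0) (-(b*tau)))%C.
Proof.
  intros hp h1 h2 hb ht. unfold nu. cbn [th_sigma2 th_Q2 th_phi th_varsigma2 th_omega2 th_gamma2 th_alpha th_beta].
  rewrite !cpow_CE by auto. rewrite Cdiv_R.
  2:{ apply Rmult_integral_contrapositive; split; [apply Rmult_integral_contrapositive; split|]; auto using pow_nonzero. }
  set (x := b * tau / 2). replace (b * tau) with (2 * x) by (unfold x; field).
  unfold Poly, cc1, cc2, Aa, CE, RtoC, Cplus, Cmult, Cminus, Copp; simpl.
  rewrite exp_0, !cos_neg, !sin_neg, cos_2a_cos, sin_2a.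
  apply injective_projections; simpl; field; repeat split; auto.
Qed.


Definition tn (n : nat) : R := 2 + INR n / 10.

Definition terms p v a b : list (C*C) :=
 [ (Cmult (RtoC (cc2 p v)) (CE (exp (2 * Lg p)) (ang p * 2)), CE (exp (Lg p / 10)) (ang p / 10));
   (Cmult (RtoC (-4 * cc2 p v)) (CE (exp (Lg p)) (ang p)), CE (exp (Lg p / 20)) (ang p / 20));
   (Cmult (RtoC (- Aa a b)) (CE (exp 0) b), CE (exp 0) (b/20));
   (Cmult (RtoC (- Aa a b)) (CE (exp 0) (-b)), CE (exp 0) (-b/20));
   (Cmult (RtoC (Aa a b/4)) (CE (exp 0) (2*b)), CE (exp 0) (b/10));
   (Cmult (RtoC (Aa a b/4)) (CE (exp 0) (-(2*b))), CE (exp 0) (-b/10)) ].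

Lemma decomp_n s q p v w g a b n : p <> 0 -> p - 1 <> 0 -> p + 1 <> 0 -> 1 - cos b <> 0 ->
  Cmult (RtoC (tn n ^2)) (nu (tn n) (mkTheta s q p v w g a b)) =
  Cplus (RtoC (Poly s q p v w g a b (tn n))) (SS (terms p v a b) n).
Proof.
  intros hp h1 h2 hb. assert (ht : tn n <> 0).
  { unfold tn. pose proof (pos_INR n). lra. }
  rewrite decomp by auto.
  replace (tn n * Lg p) with (2 * Lg p + INR n * (Lg p / 10)) by (unfold tn; field).
  replace (ang p * tn n) with (ang p * 2 + INR n * (ang p / 10)) by (unfold tn; field).
  replace (tn n / 2 * Lg p) with (Lg p + INR n * (Lg p / 20)) by (unfold tn; field).
  replace (ang p * (tn n / 2)) with (ang p + INR n * (ang p / 20)) by (unfold tn; field).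
  replace (-(b * tn n / 2)) with (-b + INR n * (-b/20)) by (unfold tn; field).
  replace (b * tn n / 2) with (b + INR n * (b/20)) by (unfold tn; field).
  replace (-(b * tn n)) with (-(2*b) + INR n * (-b/10)) by (unfold tn; field).
  replace (b * tn n) with (2*b + INR n * (b/10)) by (unfold tn; field).
  rewrite !CE_split, !CE_split0. unfold terms, SS. ring.
Qed.

Definition Lneg (l : list (C*C)) := map (fun p => (Copp (fst p), snd p)) l.

Lemma SS_app l1 l2 n : SS (l1 ++ l2) n = Cplus (SS l1 n) (SS l2 n).
Proof. induction l1 as [|[d m] l IH]; simpl. ring. rewrite IH. ring. Qed.

Lemma SS_neg l n : SS (Lneg l) n = Copp (SS l n).
Proof. induction l as [|[d m] l IH]; simpl. ring. rewrite IH. ring. Qed.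

Definition p5 (z : C) : C := Cpow (Cminus z 1) 5.
Arguments p5 : simpl never.

Definition scale5 (l : list (C*C)) := map (fun p => (Cmult (fst p) (p5 (snd p)), snd p)) l.

Definition D5 (f : nat -> C) (n : nat) : C :=
  (f (5+n)%nat - RtoC 5 * f (4+n)%nat + RtoC 10 * f (3+n)%nat - RtoC 10 * f (2+n)%nat
   + RtoC 5 * f (1+n)%nat - f n)%C.

Lemma D5_SS l n : D5 (SS l) n = SS (scale5 l) n.
Proof.
  induction l as [|[d m] l IH].
  - unfold D5. simpl. ring.
  - unfold D5 in *. simpl SS in *. rewrite <- IH. unfold p5. simpl Cpow. ring.
Qed.

Lemma D5_poly k4 k3 k1 k0 n :
  D5 (fun n => RtoC (k4 * tn n ^ 4 + k3 * tn n ^ 3 + k1 * tn n + k0)) n = 0%C.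
Proof.
  unfold D5, tn. rewrite !plus_INR. simpl INR.
  apply injective_projections; simpl; unfold Rdiv; ring.
Qed.

Definition deq (x y : C) : bool := if excluded_middle_informative (x = y) then true else false.
Lemma deq_true x y : x = y -> deq x y = true.
Proof. intros; unfold deq; destruct excluded_middle_informative; auto; contradiction. Qed.
Lemma deq_false x y : x <> y -> deq x y = false.
Proof. intros; unfold deq; destruct excluded_middle_informative; auto; contradiction. Qed.

Lemma SS_split l nu n : SS l n = Cplus (Cmult (Cpow nu n) (SS (filter (fun p => deq (snd p) nu) l) 0))
   (SS (filter (fun p => negb (deq (snd p) nu)) l) n).
Proof.
  induction l as [|[d m] l IH]; cbn [SS filter]. ring.
  cbn [snd]. destruct (deq m nu) eqn:E; cbn [SS negb Cpow].
  - unfold deq in E. destruct excluded_middle_informative as [e|e]; [|discriminate].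
    rewrite IH, e. ring.
  - rewrite IH. ring.
Qed.

Lemma group l N nu : (length l < N)%nat -> (forall n, (n < N)%nat -> SS l n = 0%C) ->
  SS (filter (fun p => deq (snd p) nu) l) 0 = 0%C.
Proof.
  intros HN H. apply (isol (filter (fun p => negb (deq (snd p) nu)) l) _ nu N).
  - intros p Hp. apply filter_In in Hp. destruct Hp as [_ Hp].
    unfold deq in Hp. destruct excluded_middle_informative; simpl in Hp; congruence.
  - pose proof (filter_length_le (fun p => negb (deq (snd p) nu)) l). lia.
  - intros n Hn. rewrite <- (H n Hn), (SS_split l nu n). ring.
Qed.


Lemma pfacts p : (-1 < p < 0) \/ (0 < p < 1) ->
  p <> 0 /\ p - 1 <> 0 /\ p + 1 <> 0 /\ Lg p < 0 /\ 0 <= ang p <= PI.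
Proof.
  intros hp. pose proof PI_RGT_0.
  assert (Lg p < 0).
  { unfold Lg. rewrite <- ln_1. apply ln_increasing.
    - destruct hp; [rewrite Rabs_left|rewrite Rabs_pos_eq]; lra.
    - destruct hp; [rewrite Rabs_left|rewrite Rabs_pos_eq]; lra. }
  unfold ang. destruct (Rlt_dec 0 p); repeat split; lra.
Qed.

Lemma bfacts a b : 0 < a -> 0 < b <= PI -> 1 - cos b <> 0 /\ 0 < Aa a b.
Proof.
  intros ha hb. assert (cos b < 1).
  { rewrite <- cos_0. apply cos_decreasing_1; lra. }
  split. lra. unfold Aa. apply Rdiv_lt_0_compat; nra.
Qed.

Lemma c2_nz p v : p <> 0 -> p - 1 <> 0 -> p + 1 <> 0 -> 0 < v -> cc2 p v <> 0.
Proof.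
  intros. unfold cc2. intro E. assert (D : (p - 1) ^ 3 * (p + 1) <> 0).
  { apply Rmult_integral_contrapositive; split; auto using pow_nonzero. }
  assert (2 * p * v = 0) by (apply (Rmult_eq_reg_r (/ ((p - 1) ^ 3 * (p + 1)))); [lra| apply Rinv_neq_0_compat; auto]).
  assert (2 * p <> 0) by lra. nra.
Qed.

Lemma p5_nz mu : mu <> CE (exp 0) 0 -> p5 mu <> 0%C.
Proof.
  intros h. unfold p5. apply Cpow_neq0. intro e. apply h. rewrite <- one_CE.
  replace mu with (Cplus (Cminus mu 1) 1) by ring. rewrite e. ring.
Qed.

Lemma kill r x y mu : p5 mu <> 0%C -> Cmult (Cmult (RtoC r) (CE (exp x) y)) (p5 mu) = 0%C -> r = 0.
Proof.
  intros h H. apply Cmult_eq0 in H. destruct H as [H|H]; [|contradiction].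
  apply Cmult_eq0 in H. destruct H as [H|H]; [|exfalso; exact (CE_neq0 _ _ H)].
  injection H. auto.
Qed.

Lemma phi_eq p1 p2 : (-1 < p1 < 0) \/ (0 < p1 < 1) -> (-1 < p2 < 0) \/ (0 < p2 < 1) ->
  Lg p1 = Lg p2 -> ang p1 = ang p2 -> p1 = p2.
Proof.
  intros h1 h2 e1 e2. pose proof PI_RGT_0. unfold Lg, ang in *.
  apply ln_inv in e1; [| apply Rabs_pos_lt; lra | apply Rabs_pos_lt; lra].
  destruct (Rlt_dec 0 p1), (Rlt_dec 0 p2); try lra.
  - rewrite !Rabs_pos_eq in e1; lra.
  - rewrite !Rabs_left in e1; lra.
Qed.

Lemma pow2J J : (2 <= J)%nat -> 4 <= 2 ^ J.
Proof.
  intros h. replace J with (2 + (J - 2))%nat by lia. rewrite pow_add.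
  assert (1 <= 2 ^ (J - 2)) by (apply pow_R1_Rle; lra). simpl. lra.
Qed.

Lemma tn_Lambda J n : (2 <= J)%nat -> (n <= 20)%nat -> in_Lambda J (tn n).
Proof.
  intros hJ hn. split.
  - exists (Qmake (Z.of_nat (20 + n)) 10). unfold Q2R, tn. cbn [Qnum Qden].
    rewrite <- INR_IZR_INZ, plus_INR. simpl INR. field.
  - pose proof (pow2J J hJ). apply le_INR in hn. simpl INR in hn. unfold tn.
    pose proof (pos_INR n). split; lra.
Qed.

Lemma cc2_inj p v1 v2 : p <> 0 -> p - 1 <> 0 -> p + 1 <> 0 -> -4 * cc2 p v1 - -4 * cc2 p v2 = 0 -> v1 = v2.
Proof.
  intros h0 h1 h2 e. unfold cc2 in e.
  assert (D : (p - 1) ^ 3 * (p + 1) <> 0) by (apply Rmult_integral_contrapositive; split; auto using pow_nonzero).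
  assert (e' : -8 * p * (v1 - v2) / ((p - 1) ^ 3 * (p + 1)) = 0) by (rewrite <- e; field; auto).
  unfold Rdiv in e'. apply Rmult_integral in e'. destruct e' as [e'|e'].
  - assert (-8 * p <> 0) by lra. nra.
  - exfalso. apply (Rinv_neq_0_compat _ D). auto.
Qed.

Lemma Aa_inj a1 a2 b : 0 < a1 -> 0 < a2 -> 1 - cos b <> 0 -> - Aa a1 b - - Aa a2 b = 0 -> a1 = a2.
Proof.
  intros h1 h2 hc e. unfold Aa in e.
  assert (e' : (a2^2 - a1^2) * / (1 - cos b) = 0) by (rewrite <- e; field; auto).
  apply Rmult_integral in e'. destruct e' as [e'|e'].
  - nra.
  - exfalso. apply (Rinv_neq_0_compat _ hc). auto.
Qed.


Lemma Pdiff s1 q1 p1 v1 w1 g1 a1 b1 s2 q2 p2 v2 w2 g2 a2 b2 t :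
  Poly s1 q1 p1 v1 w1 g1 a1 b1 t - Poly s2 q2 p2 v2 w2 g2 a2 b2 t =
  (w1 - w2)/16 * t^4 + (g1 - g2)/12 * t^3 + (s1 + cc1 p1 v1 + g1/6 - (s2 + cc1 p2 v2 + g2/6)) * t
  + (6 * q1 + 3 * cc2 p1 v1 + 3/2 * Aa a1 b1 - (6 * q2 + 3 * cc2 p2 v2 + 3/2 * Aa a2 b2)).
Proof. unfold Poly. field. Qed.

Ltac neq_tac :=
  first [ assumption
        | (let E := fresh in intro E; symmetry in E; contradiction)
        | (let E := fresh in intro E; apply CE_inj in E; [destruct E; lra | split; lra | split; lra]) ].

Ltac grp HD nu H :=
  pose proof (fun h => group _ 16 nu h HD) as H; specialize (H ltac:(unfold scale5, Lneg, terms; cbn; lia));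
  unfold scale5, Lneg, terms in H; cbn [map app filter fst snd] in H;
  repeat match type of H with
  | context [deq ?x ?y] => first [ rewrite (deq_true x y eq_refl) in H | rewrite (deq_false x y) in H by neq_tac ]
  end; cbn [SS Cpow] in H.

Ltac fin1 H :=
  match type of H with
  | (Cplus (Cmult (Cmult (Cmult (RtoC ?r) (CE (exp ?x) ?y)) (p5 ?m)) _) _ = _) =>
      let E := fresh in
      assert (E : r = 0) by (apply (kill r x y m); [apply p5_nz; neq_tac | rewrite <- H; ring]);
      revert E
  | (Cplus (Cmult (Cmult (Copp (Cmult (RtoC ?r) (CE (exp ?x) ?y))) (p5 ?m)) _) _ = _) =>
      let E := fresh in
      assert (E : - r = 0) by (apply (kill (- r) x y m); [apply p5_nz; neq_tac | rewrite RtoC_opp, <- H; ring]);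
      revert E
  end.

Theorem lemma3 (J : nat) (hJ : (2 <= J)%nat) (t1 t2 : theta) :
  in_Theta t1 -> in_Theta t2 ->
  (forall tau : R, in_Lambda J tau -> nu tau t1 = nu tau t2) ->
  t1 = t2.
Proof.
  intros H1 H2 Heq.
  destruct t1 as [s1 q1 p1 v1 w1 g1 a1 b1]; destruct t2 as [s2 q2 p2 v2 w2 g2 a2 b2].
  unfold in_Theta in H1, H2; cbn in H1, H2.
  destruct H1 as (hs1 & hq1 & hv1 & hw1 & hg1 & ha1 & hp1 & hb1).
  destruct H2 as (hs2 & hq2 & hv2 & hw2 & hg2 & ha2 & hp2 & hb2).
  pose proof PI_RGT_0 as hPI.
  destruct (pfacts p1 hp1) as (f11 & f12 & f13 & hL1 & hA1).
  destruct (pfacts p2 hp2) as (f21 & f22 & f23 & hL2 & hA2).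
  destruct (bfacts a1 b1 ha1 hb1) as (hc1 & hAa1).
  destruct (bfacts a2 b2 ha2 hb2) as (hc2 & hAa2).
  assert (HA : forall n, (n <= 20)%nat ->
    Cplus (RtoC (Poly s1 q1 p1 v1 w1 g1 a1 b1 (tn n) - Poly s2 q2 p2 v2 w2 g2 a2 b2 (tn n)))
          (SS (terms p1 v1 a1 b1 ++ Lneg (terms p2 v2 a2 b2)) n) = 0%C).
  { intros n Hn. pose proof (Heq (tn n) (tn_Lambda J n hJ Hn)) as E.
    pose proof (decomp_n s1 q1 p1 v1 w1 g1 a1 b1 n f11 f12 f13 hc1) as D1.
    pose proof (decomp_n s2 q2 p2 v2 w2 g2 a2 b2 n f21 f22 f23 hc2) as D2.
    rewrite E in D1. rewrite D1 in D2.
    rewrite SS_app, SS_neg, RtoC_minus.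
    transitivity (Cminus (Cplus (RtoC (Poly s1 q1 p1 v1 w1 g1 a1 b1 (tn n))) (SS (terms p1 v1 a1 b1) n))
                         (Cplus (RtoC (Poly s2 q2 p2 v2 w2 g2 a2 b2 (tn n))) (SS (terms p2 v2 a2 b2) n))).
    ring. rewrite D2. ring. }
  assert (HD : forall n, (n < 16)%nat -> SS (scale5 (terms p1 v1 a1 b1 ++ Lneg (terms p2 v2 a2 b2))) n = 0%C).
  { intros n Hn. rewrite <- D5_SS.
    assert (Hk : forall k, (k <= 20)%nat -> SS (terms p1 v1 a1 b1 ++ Lneg (terms p2 v2 a2 b2)) k =
       Copp (RtoC (Poly s1 q1 p1 v1 w1 g1 a1 b1 (tn k) - Poly s2 q2 p2 v2 w2 g2 a2 b2 (tn k)))).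
    { intros k hk. pose proof (HA k hk) as e. 
      transitivity (Cminus (Cplus (RtoC (Poly s1 q1 p1 v1 w1 g1 a1 b1 (tn k) - Poly s2 q2 p2 v2 w2 g2 a2 b2 (tn k)))
          (SS (terms p1 v1 a1 b1 ++ Lneg (terms p2 v2 a2 b2)) k)) (RtoC (Poly s1 q1 p1 v1 w1 g1 a1 b1 (tn k) - Poly s2 q2 p2 v2 w2 g2 a2 b2 (tn k)))).
      ring. rewrite e. ring. }
    unfold D5. rewrite !Hk by lia. rewrite !Pdiff.
    pose proof (D5_poly ((w1 - w2)/16) ((g1 - g2)/12) (s1 + cc1 p1 v1 + g1/6 - (s2 + cc1 p2 v2 + g2/6))
      (6 * q1 + 3 * cc2 p1 v1 + 3/2 * Aa a1 b1 - (6 * q2 + 3 * cc2 p2 v2 + 3/2 * Aa a2 b2)) n) as P.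
    unfold D5 in P. 
    transitivity (Copp (RtoC 0)). 2:{ apply injective_projections; simpl; ring. }
    rewrite <- P. ring. }
  assert (C1 : (Lg p1 / 20 = Lg p2 / 10 /\ ang p1 / 20 = ang p2 / 10) \/
               (Lg p1 / 20 = Lg p2 / 20 /\ ang p1 / 20 = ang p2 / 20)).
  { destruct (classic (CE (exp (Lg p1 / 20)) (ang p1 / 20) = CE (exp (Lg p2 / 10)) (ang p2 / 10))) as [e|n1].
    { left. apply CE_inj in e; [exact e | split; lra | split; lra]. }
    destruct (classic (CE (exp (Lg p1 / 20)) (ang p1 / 20) = CE (exp (Lg p2 / 20)) (ang p2 / 20))) as [e|n2].
    { right. apply CE_inj in e; [exact e | split; lra | split; lra]. }
    exfalso. grp HD (CE (exp (Lg p1 / 20)) (ang p1 / 20)) H. fin1 H. intro E0. apply (c2_nz p1 v1 f11 f12 f13 hv1). lra. }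
  assert (C2 : (Lg p2 / 20 = Lg p1 / 10 /\ ang p2 / 20 = ang p1 / 10) \/
               (Lg p2 / 20 = Lg p1 / 20 /\ ang p2 / 20 = ang p1 / 20)).
  { destruct (classic (CE (exp (Lg p2 / 20)) (ang p2 / 20) = CE (exp (Lg p1 / 10)) (ang p1 / 10))) as [e|n1].
    { left. apply CE_inj in e; [exact e | split; lra | split; lra]. }
    destruct (classic (CE (exp (Lg p2 / 20)) (ang p2 / 20) = CE (exp (Lg p1 / 20)) (ang p1 / 20))) as [e|n2].
    { right. apply CE_inj in e; [exact e | split; lra | split; lra]. }
    exfalso. grp HD (CE (exp (Lg p2 / 20)) (ang p2 / 20)) H. fin1 H. intro E0. apply (c2_nz p2 v2 f21 f22 f23 hv2). lra. }
  assert (ep : p1 = p2).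
  { apply phi_eq; auto; destruct C1 as [[x1 y1]|[x1 y1]]; destruct C2 as [[x2 y2]|[x2 y2]]; lra. }
  subst p2. clear C1 C2.
  assert (ev : v1 = v2).
  { grp HD (CE (exp (Lg p1 / 20)) (ang p1 / 20)) H. apply (cc2_inj p1); auto.
    apply (kill _ (Lg p1) (ang p1) (CE (exp (Lg p1 / 20)) (ang p1 / 20))).
    - apply p5_nz. neq_tac.
    - rewrite RtoC_minus, <- H. ring. }
  subst v2.
  assert (C1 : b1 / 20 = b2 / 20 \/ b1 / 20 = b2 / 10).
  { destruct (classic (CE (exp 0) (b1 / 20) = CE (exp 0) (b2 / 20))) as [e|n1].
    { left. apply CE_inj in e; [apply e | split; lra | split; lra]. }
    destruct (classic (CE (exp 0) (b1 / 20) = CE (exp 0) (b2 / 10))) as [e|n2].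
    { right. apply CE_inj in e; [apply e | split; lra | split; lra]. }
    exfalso. grp HD (CE (exp 0) (b1 / 20)) H. fin1 H. lra. }
  assert (C2 : b2 / 20 = b1 / 20 \/ b2 / 20 = b1 / 10).
  { destruct (classic (CE (exp 0) (b2 / 20) = CE (exp 0) (b1 / 20))) as [e|n1].
    { left. apply CE_inj in e; [apply e | split; lra | split; lra]. }
    destruct (classic (CE (exp 0) (b2 / 20) = CE (exp 0) (b1 / 10))) as [e|n2].
    { right. apply CE_inj in e; [apply e | split; lra | split; lra]. }
    exfalso. grp HD (CE (exp 0) (b2 / 20)) H. fin1 H. lra. }
  assert (eb : b1 = b2) by (destruct C1, C2; lra).
  subst b2. clear C1 C2.
  assert (ea : a1 = a2).
  { grp HD (CE (exp 0) (b1 / 20)) H. apply (Aa_inj a1 a2 b1); auto.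
    apply (kill _ 0 b1 (CE (exp 0) (b1 / 20))).
    - apply p5_nz. neq_tac.
    - rewrite RtoC_minus, <- H. ring. }
  subst a2.
  assert (HZ : forall n, SS (terms p1 v1 a1 b1 ++ Lneg (terms p1 v1 a1 b1)) n = 0%C)
    by (intros; rewrite SS_app, SS_neg; ring).
  assert (HP : forall n, (n <= 20)%nat -> Poly s1 q1 p1 v1 w1 g1 a1 b1 (tn n) = Poly s2 q2 p1 v1 w2 g2 a1 b1 (tn n)).
  { intros n hn. pose proof (HA n hn) as e. rewrite HZ in e. apply (f_equal fst) in e.
    cbn [fst Cplus RtoC] in e. lra. }
  assert (T0 : tn 0 = 2) by (unfold tn; simpl; field).
  assert (T5 : tn 5 = 5/2) by (unfold tn; simpl; field).
  assert (T10 : tn 10 = 3) by (unfold tn; simpl; field).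
  assert (T20 : tn 20 = 4) by (unfold tn; simpl; field).
  pose proof (HP 0%nat ltac:(lia)) as e0. pose proof (HP 5%nat ltac:(lia)) as e5.
  pose proof (HP 10%nat ltac:(lia)) as e10. pose proof (HP 20%nat ltac:(lia)) as e20.
  rewrite T0 in e0. rewrite T5 in e5. rewrite T10 in e10. rewrite T20 in e20.
  unfold Poly in e0, e5, e10, e20.
  assert (w1 = w2 /\ g1 = g2 /\ s1 = s2 /\ q1 = q2) as (? & ? & ? & ?) by (simpl in *; repeat split; lra).
  subst. reflexivity.
Qed.
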